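(* Under the standing assumptions, let $u\in X\setminus\{0\}$ and $\zeta\in X^*\setminus\{0\}$ with $\zeta\in\partial J(u)$. Then $g(u,\zeta)=0$ if and only if $u$ is a $p$-eigenvector of $J$ with subgradient $\zeta$ (and eigenvalue $\lambda=R(u)$).
   Context: Standing assumptions: $X$ is a real reflexive Banach space with dual $X^*$ and duality pairing $\langle\cdot,\cdot\rangle$; $\Gamma_0(X)$ is the class of proper, lower semi-continuous, convex functionals $X\to\mathbb{R}\cup\{+\infty\}$. Fix $1<p<\infty$ and $q=\frac{p}{p-1}$. Let $J\in\Gamma_0(X)$, and let $H\in\Gamma_0(X)$ be absolutely $p$-homogeneous ($H(tu)=|t|^pH(u)$) such that $|u|_H:=(pH(u))^{1/p}$ is a norm on $X$, so $H(u)=\frac1p|u|_H^p$. The dual norm is $|\zeta|_{H^*}=\sup_{u\ne0}\langle\zeta,u\rangle/|u|_H$, and $H^*(\zeta)=\frac1q|\zeta|_{H^*}^q$. The Fenchel conjugate is $J^*(\zeta)=\sup_{u\in X}\langle\zeta,u\rangle-J(u)$ and the subdifferential is $\partial J(u)=\{\zeta\in X^*:\ J(u)+\langle\zeta,v-u\rangle\le J(v)\ \forall v\in X\}$. Growth assumption: there is $c>0$ with $H(u)\le cJ(u)$ for all $u\in X$. The Rayleigh quotient is $R(u)=J(u)/H(u)$ for $u\ne0$ and the dual Rayleigh quotient is $R_*(\zeta)=J^*(\zeta)/H^*(\zeta)$ for $\zeta\ne0$. The duality gap is $g(u,\zeta)=R(u)^{-1/p}-\operatorname{sign}(J^*(\zeta))\,|R_*(\zeta)|^{1/q}$.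 A $p$-eigenvector of $J$: $u\in X\setminus\{0\}$ with subgradient $\zeta\in\partial J(u)$ and eigenvalue $\lambda=R(u)\in\mathbb{R}$ such that $\zeta\in\lambda\,\partial H(u)$. *)

(* Defs.v *)
From HB Require Import structures.
From mathcomp Require Import all_boot all_order all_algebra.
From mathcomp Require Import all_classical all_reals all_analysis.
Set Implicit Arguments. Unset Strict Implicit. Unset Printing Implicit Defensive.
Import Order.TTheory GRing.Theory Num.Theory.
Import numFieldNormedType.Exports.
Local Open Scope classical_set_scope.
Local Open Scope ring_scope.

Section Defs.
Context {R : realType} {X : normedModType R}.

(* elements of the topological dual X^* : continuous linear functionals;
   the duality pairing <zeta, u> is application zeta u *)
Definition is_dual (zeta : X -> R) : Prop :=
  (forall (a : R) (x y : X), zeta (a *: x + y) = a * zeta x + zeta y)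
  /\ continuous zeta.

Definition dual_norm (zeta : X -> R) : \bar R :=
  ereal_sup [set (`|zeta x|)%:E | x in [set x : X | `|x| <= 1]].

Definition reflexive_space : Prop :=
  forall Phi : (X -> R) -> R,
    (forall (a : R) (z1 z2 : X -> R), is_dual z1 -> is_dual z2 ->
        Phi (fun x => a * z1 x + z2 x) = a * Phi z1 + Phi z2) ->
    (exists C : R, forall z, is_dual z ->
        ((`|Phi z|)%:E <= C%:E * dual_norm z)%E) ->
    exists x : X, forall z, is_dual z -> Phi z = z x.

Definition proper_fun (J : X -> \bar R) : Prop :=
  (exists x, (J x < +oo)%E) /\ (forall x, (-oo < J x)%E).

Definition convex_efun (J : X -> \bar R) : Prop :=
  forall (x y : X) (t : R), 0 < t < 1 ->
    (J (t *: x + (1 - t) *: y)%R <= t%:E * J x + (1 - t)%:E * J y)%E.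

Definition Gamma0 (J : X -> \bar R) : Prop :=
  proper_fun J /\ lower_semicontinuous J /\ convex_efun J.

Definition fconj (J : X -> \bar R) (zeta : X -> R) : \bar R :=
  ereal_sup [set ((zeta u)%:E - J u)%E | u in [set: X]].

Definition subdiff (J : X -> \bar R) (u : X) : set (X -> R) :=
  [set zeta | is_dual zeta /\
     forall v : X, (J u + (zeta (v - u)%R)%:E <= J v)%E].

Definition is_norm (N : X -> R) : Prop :=
  (forall x, N x = 0 -> x = 0) /\
  (forall (t : R) x, N (t *: x) = `|t| * N x) /\
  (forall x y, N (x + y) <= N x + N y).

Definition Hnorm (p : R) (H : X -> \bar R) (u : X) : R :=
  powR (p * fine (H u)) p^-1.

Definition rayleigh (J H : X -> \bar R) (u : X) : \bar R :=
  (J u * ((fine (H u))^-1)%:E)%E.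

Definition rayleigh_dual (J H : X -> \bar R) (zeta : X -> R) : \bar R :=
  (fconj J zeta * inve (fconj H zeta))%E.

Definition sgnE (x : \bar R) : R :=
  match x with
  | r%:E => Num.sg r
  | +oo%E => 1
  | -oo%E => -1
  end.

Definition duality_gap (p : R) (J H : X -> \bar R) (u : X) (zeta : X -> R)
    : \bar R :=
  let q := p / (p - 1) in
  (poweR (rayleigh J H u) (- p^-1)
   - (sgnE (fconj J zeta))%:E * poweR (abse (rayleigh_dual J H zeta)) q^-1)%E.

Definition p_eigenvector (J H : X -> \bar R) (u : X) (zeta : X -> R) : Prop :=
  u <> 0 /\ subdiff J u zeta /\
  exists lambda : R, rayleigh J H u = lambda%:E /\
    exists eta, subdiff H u eta /\ zeta = (fun x => lambda * eta x).

End Defs.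

(* Main.v *)
Require Import Defs.
From HB Require Import structures.
From mathcomp Require Import all_boot all_order all_algebra.
From mathcomp Require Import all_classical all_reals all_analysis.
From mathcomp Require Import ring lra.
Import Order.TTheory GRing.Theory Num.Theory.
Import numFieldNormedType.Exports.
Local Open Scope classical_set_scope.
Local Open Scope ring_scope.

Section Aux.
Context {R : realType} {X : normedModType R}.

Lemma dual_lin (z : X -> R) : is_dual z ->
  [/\ z 0 = 0, forall a x, z (a *: x) = a * z x & forall x y, z (x - y) = z x - z y].
Proof.
case=> lin _.
have z0 : z 0 = 0.
  by have := lin 1 0 0; rewrite scale1r addr0 mul1r; lra.
have zs : forall a x, z (a *: x) = a * z x.
  by move=> a x; have := lin a x 0; rewrite addr0 z0 addr0.
split=> // x y.
by have := lin (-1) y x; rewrite scaleN1r addrC => ->; ring.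
Qed.

Lemma sup_ub (f : X -> \bar R) v : (f v <= ereal_sup [set f u | u in [set: X]])%E.
Proof. by apply: ereal_sup_ubound; exists v. Qed.

Lemma sup_att (f : X -> \bar R) u : (forall v, (f v <= f u)%E) ->
  ereal_sup [set f w | w in [set: X]] = f u.
Proof.
move=> H; apply/eqP; rewrite eq_le sup_ub andbT.
by apply: ge_ereal_sup => _ [w _ <-].
Qed.


Lemma powR_pm1 (t p : R) : 0 < t -> powR t p = powR t (p - 1) * t.
Proof.
move=> t0; rewrite -{3}(powRr1 (ltW t0)) -powRD ?subrK //.
by rewrite (gt_eqF t0) implybT.
Qed.

Lemma powR_root (a p : R) : 0 <= a -> 1 < p -> powR (powR a (p - 1)^-1) (p - 1) = a.
Proof.
move=> a0 p1; rewrite -powRrM mulVf ?powRr1 //; lra.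
Qed.

Lemma posH (Hr : X -> R) (p : R) : 1 < p ->
  (forall t v, Hr (t *: v) = powR `|t| p * Hr v) ->
  forall z, is_dual z -> z <> (fun _ => 0) -> exists v, 0 < z v - Hr v.
Proof.
move=> p1 hom z zd znz.
have [z0 zs zB] := dual_lin z zd.
have [w wpos] : exists w, 0 < z w.
  apply: contrapT => hn; apply: znz; apply/funext => x.
  have h1 : ~ 0 < z x by move=> h; apply: hn; exists x.
  have h2 : ~ 0 < z (- x) by move=> h; apply: hn; exists (- x).
  move: h2; rewrite -scaleN1r zs => h2.
  apply/eqP; rewrite eq_le; apply/andP; split; rewrite leNgt; apply/negP => // h.
  by apply: h2; lra.
have [b0|bpos] := lerP (Hr w) 0.
  by exists w; lra.
move: wpos bpos; set a := z w; set b := Hr w => wpos bpos.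
set t := powR (a / (2 * b)) (p - 1)^-1.
have t0 : 0 < t by apply: powR_gt0; apply: divr_gt0 => //; lra.
exists (t *: w); rewrite zs hom (gtr0_norm t0) powR_pm1 // powR_root //; last first.
  by apply: divr_ge0; lra.
rewrite -/a -/b.
have -> : a / (2 * b) * t * b = t * a / 2 by field; lra.
have ta : 0 < t * a by apply: mulr_gt0.
lra.
Qed.

End Aux.

Theorem proposition2p7 (R : realType) (X : completeNormedModType R)
  (p : R) (J H : X -> \bar R) :
  reflexive_space (X := X) ->
  1 < p ->
  Gamma0 J ->
  Gamma0 H ->
  (forall (t : R) (u : X), H (t *: u) = ((powR `|t| p)%:E * H u)%E) ->
  (forall u : X, H u \is a fin_num) ->
  is_norm (Hnorm p H) ->
  (exists2 c : R, 0 < c & forall u : X, (H u <= c%:E * J u)%E) ->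
  forall (u : X) (zeta : X -> R),
    u <> 0 -> is_dual zeta -> zeta <> (fun _ => 0) ->
    subdiff J u zeta ->
    (duality_gap p J H u zeta = 0%E <-> p_eigenvector J H u zeta).
Proof.
move=> _ p1 [JP [_ _]] [_ [_ Hcvx]] hom Hfin Hn [c c0 Hc] u zeta u0 zd znz zsub.
pose Hr v := fine (H v).
have HE : forall v, H v = (Hr v)%:E by move=> v; rewrite /Hr fineK.
have homr : forall t v, Hr (t *: v) = powR `|t| p * Hr v.
  by move=> t v; rewrite /Hr hom (HE v).
have p0 : p != 0 by rewrite gt_eqF //; lra.
have pm10 : p - 1 != 0 by rewrite subr_eq0 gt_eqF.
have H0 : Hr 0 = 0.
  by have := homr 0 0; rewrite scale0r normr0 powR0 // mul0r.
have Hge0 : forall v, 0 <= Hr v.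
  move=> v; have := Hcvx v (- v) (2^-1).
  have -> : (1 - 2^-1 : R) = 2^-1 by field.
  rewrite scalerN subrr !HE -!EFinM -EFinD lee_fin -scaleN1r homr normrN normr1 powR1 H0.
  by move=> /(_ _) h; have := h ltac:(apply/andP; split; lra); lra.
have Hpos : forall v, v <> 0 -> 0 < Hr v.
  move=> v v0; rewrite lt_neqAle Hge0 andbT; apply/eqP => h0; apply: v0.
  apply: Hn.1; rewrite /Hnorm -/(Hr v) -h0 mulr0 powR0 //.
  by rewrite invr_eq0.
have [dl1 dl2] := zd.
have [z0 zs zB] := dual_lin zeta zd.
have [j JuE] : exists j, J u = j%:E.
  case E: (J u) => [j| |]; first by exists j.
  - case: JP.1 => x Jx; have := zsub.2 x; rewrite E /=.
    by rewrite leye_eq => /eqP h; rewrite h in Jx.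
  - by have := JP.2 u; rewrite E.
have hpos := Hpos u u0.
have jpos : 0 < j.
  have := Hc u; rewrite HE JuE -EFinM lee_fin => h; nra.
set h := Hr u in hpos.
set lam := j / h.
have lam0 : 0 < lam by apply: divr_gt0.
have RE : rayleigh J H u = lam%:E by rewrite /rayleigh JuE.
have FJ : fconj J zeta = (zeta u - j)%:E.
  rewrite /fconj (@sup_att _ _ (fun v => (zeta v)%:E - J v)%E u) ?JuE //.
  move=> v; have := zsub.2 v; rewrite JuE zB.
  case: (J v) => [r| |] /=.
  - by rewrite -!EFinD !lee_fin; lra.
  - by move=> _; rewrite addeNy leNye.
  - by rewrite leeNy_eq.
set mu := powR lam (p - 1)^-1.
have mu0 : 0 < mu by apply: powR_gt0.
have muP : powR mu p = lam * mu by rewrite powR_pm1 // powR_root ?(ltW lam0).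
set qi := (p / (p - 1))^-1.
have qi0 : qi != 0 by rewrite /qi invr_eq0 mulf_neq0 // invr_eq0 subr_eq0 gt_eqF.
rewrite /duality_gap RE FJ poweR_EFin -/qi /rayleigh_dual FJ /=.
have pl0 : 0 < powR lam (- p^-1) by apply: powR_gt0.
have ubH : forall z v, ((z v - Hr v)%:E <= fconj H z)%E.
  by move=> z v; rewrite EFinB -HE; apply: (@sup_ub _ _ (fun v => (z v)%:E - H v)%E).
split.
- move=> gap.
  have [v0 v0pos] := @posH _ _ Hr p p1 homr zeta zd znz.
  have ylb := ubH zeta v0.
  case Ey: (fconj H zeta) => [hs| |]; rewrite Ey in ylb gap; last first.
  + by move: ylb; rewrite leeNy_eq.
  + move: gap; rewrite invey mule0 abse0 poweR0r // mule0 sube0 => /eqP.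
    by rewrite eqe gt_eqF.
  have hs0 : 0 < hs by move: ylb; rewrite lee_fin; lra.
  move: gap; rewrite inver (gt_eqF hs0) -EFinM /=.
  rewrite -EFinD => /(congr1 fine) /= /eqP; rewrite subr_eq0 eq_sym => /eqP gap.
  set js := zeta u - j in gap.
  have pg0 : forall x, 0 <= powR x qi by move=> x; apply: powR_ge0.
  have js0 : 0 < js.
    case: (ltrgtP js 0) => hj.
    - by move: gap; rewrite ltr0_sg //; have := pg0 `|js / hs|; lra.
    - by [].
    - by move: gap; rewrite hj sgr0 mul0r; lra.
  move: gap; rewrite gtr0_sg // mul1r ger0_norm; last by apply: divr_ge0; lra.
  move=> gap.
  have rE : js / hs = mu^-1.
    have -> : js / hs = powR (powR (js / hs) qi) (p / (p - 1)).
      by rewrite -powRrM mulVf ?powRr1 //; [apply: divr_ge0; lra | rewrite -invr_eq0].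
    rewrite gap -powRrM /mu -powRN; congr powR.
    by field; rewrite pm10 p0.
  have hsE : hs = mu * js.
    rewrite -[js](@divfK _ hs) ?gt_eqF // rE.
    by rewrite mulrA mulfV ?mul1r // lt0r_neq0.
  have lamn0 : lam != 0 by rewrite lt0r_neq0.
  split => //; split => //; exists lam; split => //.
  exists (fun x => lam^-1 * zeta x); split; last first.
    by apply/funext => x; rewrite mulrA mulfV ?mul1r.
  split.
    split; first by move=> a x y; rewrite dl1; ring.
    move=> x; exact: (@continuousM _ _ (fun=> lam^-1) zeta x (@cst_continuous _ _ _ x) (dl2 x)).
  move=> v; rewrite !HE -EFinD lee_fin zB.
  have := ubH zeta (mu *: v); rewrite Ey lee_fin zs homr (gtr0_norm mu0) muP hsE.
  move=> key.
  have key2 : zeta v - lam * Hr v <= zeta u - lam * h.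
    rewrite -(ler_pM2l mu0).
    have -> : lam * h = j by rewrite /lam; field; rewrite lt0r_neq0.
    rewrite -/js; lra.
  have e1 : h + lam^-1 * (zeta v - zeta u) = lam^-1 * (lam * h + zeta v - zeta u) by field.
  have e2 : Hr v = lam^-1 * (lam * Hr v) by field.
  rewrite -/h e1 e2 ler_pM2l ?invr_gt0 //; lra.
- move=> [_ [_ [l [Rl [eta [[ed esub] zE]]]]]].
  have ll : l = lam by move: Rl; rewrite RE => -[].
  subst l.
  have [e0 es eB] := dual_lin eta ed.
  set d := eta u - h.
  have D : forall v, eta v - Hr v <= d.
    move=> v; have := esub v; rewrite !HE -EFinD lee_fin eB -/h /d; lra.
  have enz : eta <> (fun=> 0).
    move=> e0'; apply: znz; rewrite zE e0'; apply/funext => x /=.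
    by rewrite mulr0.
  have [v1 v1pos] := @posH _ _ Hr p p1 homr eta ed enz.
  have d0 : 0 < d by have := D v1; lra.
  have FH : fconj H zeta = (lam * mu * d)%:E.
    rewrite /fconj (@sup_att _ _ (fun v => (zeta v)%:E - H v)%E (mu *: u)).
      by rewrite HE -EFinB zE /= es homr (gtr0_norm mu0) muP -/h /d; congr EFin; ring.
    move=> v; rewrite !HE -!EFinB lee_fin zE /= es homr (gtr0_norm mu0) muP -/h.
    have vE : v = mu *: (mu^-1 *: v) by rewrite scalerA mulfV ?scale1r // lt0r_neq0.
    rewrite [in X in X <= _]vE es homr (gtr0_norm mu0) muP.
    have := D (mu^-1 *: v) => Dv.
    have lm0 : 0 < lam * mu by apply: mulr_gt0.
    have -> : lam * (mu * eta (mu^-1 *: v)) - lam * mu * Hr (mu^-1 *: v)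
      = lam * mu * (eta (mu^-1 *: v) - Hr (mu^-1 *: v)) by ring.
    have -> : lam * (mu * eta u) - lam * mu * h = lam * mu * d by rewrite /d; ring.
    by rewrite ler_pM2l.
  have jE : j = lam * h by rewrite /lam; field; rewrite lt0r_neq0.
  have jsE : zeta u - j = lam * d by rewrite zE jE /d; ring.
  rewrite FH jsE inver.
  have lmd : 0 < lam * mu * d by do 2 apply: mulr_gt0 => //.
  rewrite (gt_eqF lmd).
  rewrite -EFinM /= (gtr0_sg (mulr_gt0 lam0 d0)) mul1r.
  have -> : lam * d / (lam * mu * d) = mu^-1.
    by field; rewrite !lt0r_neq0.
  rewrite ger0_norm ?invr_ge0 ?(ltW mu0) // /mu -powRN -powRrM.
  have -> : - (p - 1)^-1 * qi = - p^-1 by rewrite /qi; field; rewrite pm10 p0.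
  by rewrite -EFinD subrr.
Qed.
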